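(* There exists a unique $\mathbb{Q}(q)$-algebra anti-isomorphism $\sigma\colon \mathrm{El}^\vee_\epsilon\to \mathrm{El}_\epsilon$ with $\sigma(\mathcal{E}_i)=q^{-\epsilon}\mathcal{E}_{i+1}$ for all $i\in\mathbb{Z}$ (anti-isomorphism: $\mathbb{Q}(q)$-linear bijection with $\sigma(uv)=\sigma(v)\sigma(u)$ and $\sigma(1)=1$).
   Context: $\mathbb{Q}(q)$ is the field of rational functions in $q$ over $\mathbb{Q}$; $[2]=q+q^{-1}$. Fix $\epsilon\in\{1,-1\}$. For $i,j\in\mathbb{Z}$ put $b_{ij}=-2$ if $j\in\{i,i+1\}$ and $b_{ij}=4\,\mathrm{sgn}(j-i)(-1)^{j-i}$ otherwise. The $q$-electrical algebra $\mathrm{El}_\epsilon$ is the $\mathbb{Q}(q)$-algebra generated by $\mathcal{E}_i$, $i\in\mathbb{Z}$, subject to: (1) $\mathcal{E}_i\mathcal{E}_j=q^{b_{ij}}\mathcal{E}_j\mathcal{E}_i$ if $|i-j|>1$; (2) $q^3\mathcal{E}_i^2\mathcal{E}_{i+1}-[2]\mathcal{E}_i\mathcal{E}_{i+1}\mathcal{E}_i+q^{-3}\mathcal{E}_{i+1}\mathcal{E}_i^2=-q^{\epsilon}[2]\mathcal{E}_i$; (3) $q^{-3}\mathcal{E}_i^2\mathcal{E}_{i-1}-[2]\mathcal{E}_i\mathcal{E}_{i-1}\mathcal{E}_i+q^{3}\mathcal{E}_{i-1}\mathcal{E}_i^2=-q^{\epsilon}[2]\mathcal{E}_i$, for all $i,j\in\mathbb{Z}$.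 The algebra $\mathrm{El}^\vee_\epsilon$ is the $\mathbb{Q}(q)$-algebra generated by $\mathcal{E}_i$, $i\in\mathbb{Z}$, subject to: (1') $\mathcal{E}_i\mathcal{E}_j=q^{-b_{ij}}\mathcal{E}_j\mathcal{E}_i$ if $|i-j|>1$; (2') $q^{-3}\mathcal{E}_i^2\mathcal{E}_{i+1}-[2]\mathcal{E}_i\mathcal{E}_{i+1}\mathcal{E}_i+q^{3}\mathcal{E}_{i+1}\mathcal{E}_i^2=-q^{-\epsilon}[2]\mathcal{E}_i$; (3') $q^{3}\mathcal{E}_i^2\mathcal{E}_{i-1}-[2]\mathcal{E}_i\mathcal{E}_{i-1}\mathcal{E}_i+q^{-3}\mathcal{E}_{i-1}\mathcal{E}_i^2=-q^{-\epsilon}[2]\mathcal{E}_i$. *)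

(* Defs.v *)
From HB Require Import structures.
From mathcomp Require Import all_boot all_order all_algebra fraction.
Set Implicit Arguments. Unset Strict Implicit. Unset Printing Implicit Defensive.
Import Order.TTheory GRing.Theory Num.Theory.
Local Open Scope ring_scope.

Definition Kq : fieldType := {fraction {poly rat}}.
Definition q : Kq := @FracField.tofrac {poly rat} 'X.
Definition q2 : Kq := q + q^-1.

Definition bq (i j : int) : int :=
  if (j == i) || (j == i + 1) then -2
  else 4 * sgz (j - i) * (-1) ^ (j - i).

Definition El_rels (eps : int) (A : algType Kq) (E : int -> A) : Prop :=
  (forall i j : int, 1 < `|i - j| -> E i * E j = q ^ (bq i j) *: (E j * E i)) /\
  (forall i : int,
     q ^ 3 *: (E i ^+ 2 * E (i + 1)) - q2 *: (E i * E (i + 1) * E i)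
       + q ^ (-3) *: (E (i + 1) * E i ^+ 2) = - (q ^ eps * q2) *: E i) /\
  (forall i : int,
     q ^ (-3) *: (E i ^+ 2 * E (i - 1)) - q2 *: (E i * E (i - 1) * E i)
       + q ^ 3 *: (E (i - 1) * E i ^+ 2) = - (q ^ eps * q2) *: E i).

Definition Elv_rels (eps : int) (A : algType Kq) (E : int -> A) : Prop :=
  (forall i j : int, 1 < `|i - j| -> E i * E j = q ^ (- bq i j) *: (E j * E i)) /\
  (forall i : int,
     q ^ (-3) *: (E i ^+ 2 * E (i + 1)) - q2 *: (E i * E (i + 1) * E i)
       + q ^ 3 *: (E (i + 1) * E i ^+ 2) = - (q ^ (- eps) * q2) *: E i) /\
  (forall i : int,
     q ^ 3 *: (E i ^+ 2 * E (i - 1)) - q2 *: (E i * E (i - 1) * E i)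
       + q ^ (-3) *: (E (i - 1) * E i ^+ 2) = - (q ^ (- eps) * q2) *: E i).

Definition is_alg_hom (A B : algType Kq) (f : A -> B) : Prop :=
  (forall (a : Kq) (x y : A), f (a *: x + y) = a *: f x + f y) /\
  (forall x y : A, f (x * y) = f x * f y) /\ f 1 = 1.

Definition is_alg_antiiso (A B : algType Kq) (f : A -> B) : Prop :=
  (forall (a : Kq) (x y : A), f (a *: x + y) = a *: f x + f y) /\
  bijective f /\
  (forall x y : A, f (x * y) = f y * f x) /\ f 1 = 1.

(* (A, E) is the Kq-algebra presented by generators E_i (i in Z) and the
   relations rels: E satisfies rels, and for every Kq-algebra B with a family
   F satisfying rels there is a unique algebra homomorphism A -> B sending
   E i to F i. *)
Definition presents (rels : forall B : algType Kq, (int -> B) -> Prop)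
    (A : algType Kq) (E : int -> A) : Prop :=
  rels A E /\
  forall (B : algType Kq) (F : int -> B), rels B F ->
    exists f : A -> B, is_alg_hom f /\ (forall i, f (E i) = F i) /\
      forall g : A -> B, is_alg_hom g -> (forall i, g (E i) = F i) ->
        forall x, g x = f x.

(* Main.v *)
Require Import Defs.
From HB Require Import structures.
From mathcomp Require Import all_boot all_order all_algebra ring zify.
Import Order.TTheory GRing.Theory Num.Theory.
Local Open Scope ring_scope.

Definition revA (A : algType Kq) : Type := A.
Section Rev.
Variable A : algType Kq.
HB.instance Definition _ := GRing.Lmodule.copy (revA A) A.
Definition rmul (x y : revA A) : revA A := (y : A) * (x : A).
Lemma rmulA : associative rmul. Proof. by move=> x y z; rewrite /rmul mulrA. Qed.
Lemma rmul1r : left_id (1 : A) rmul. Proof. by move=> x; rewrite /rmul mulr1. Qed.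
Lemma rmulr1 : right_id (1 : A) rmul. Proof. by move=> x; rewrite /rmul mul1r. Qed.
Lemma rmulDl : left_distributive rmul +%R. Proof. by move=> x y z; rewrite /rmul mulrDr. Qed.
Lemma rmulDr : right_distributive rmul +%R. Proof. by move=> x y z; rewrite /rmul mulrDl. Qed.
HB.instance Definition _ := GRing.Zmodule_isNzRing.Build (revA A) rmulA rmul1r rmulr1 rmulDl rmulDr (oner_neq0 A).
Lemma revA_scalerAl (a : Kq) (u v : revA A) : a *: (@GRing.mul (revA A) u v) = @GRing.mul (revA A) (a *: u) v.
Proof. exact (@scalerAr Kq A a v u). Qed.
HB.instance Definition _ := GRing.Lmodule_isLalgebra.Build Kq (revA A) revA_scalerAl.
Lemma revA_scalerAr (a : Kq) (u v : revA A) : a *: (@GRing.mul (revA A) u v) = @GRing.mul (revA A) u (a *: v).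
Proof. exact (@scalerAl Kq A a v u). Qed.
HB.instance Definition _ := GRing.Lalgebra_isAlgebra.Build Kq (revA A) revA_scalerAr.
Definition revAT : algType Kq := revA A.
Lemma revM (x y : revAT) : x * y = (y : A) * (x : A). Proof. by []. Qed.
Lemma revZ (a : Kq) (x : revAT) : a *: x = a *: (x : A). Proof. by []. Qed.
Lemma revD (x y : revAT) : x + y = (x : A) + (y : A). Proof. by []. Qed.
Lemma rev1 : (1 : revAT) = (1 : A). Proof. by []. Qed.
End Rev.
Lemma q_neq0 : q != 0.
Proof. by rewrite /q tofrac_eq0 polyX_eq0. Qed.

Lemma L1 (A : algType Kq) (c s : Kq) (x y : A) :
  x * y = s *: (y * x) ->
  ((c *: y : revAT A) * (c *: x : revAT A)) = s *: ((c *: x : revAT A) * (c *: y : revAT A)).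
Proof.
move=> h.
change ((c *: x) * (c *: y) = s *: ((c *: y) * (c *: x)) :> A).
rewrite -!scalerAl -!scalerAr h !scalerA; congr (_ *: _); ring.
Qed.

Lemma L2 (A : algType Kq) (a b r c : Kq) (x y : A) :
  a *: (x ^+ 2 * y) - q2 *: (x * y * x) + b *: (y * x ^+ 2) = r *: x ->
  b *: ((c *: x : revAT A) ^+ 2 * (c *: y : revAT A))
   - q2 *: ((c *: x : revAT A) * (c *: y : revAT A) * (c *: x : revAT A))
   + a *: ((c *: y : revAT A) * (c *: x : revAT A) ^+ 2) = (r * c ^+ 2) *: (c *: x : revAT A).
Proof.
move=> h.
change (b *: ((c *: y) * ((c *: x) * (c *: x))) - q2 *: ((c *: x) * ((c *: y) * (c *: x)))
   + a *: (((c *: x) * (c *: x)) * (c *: y)) = (r * c ^+ 2) *: (c *: x) :> A).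
transitivity (c^+3 *: (a *: (x ^+ 2 * y) - q2 *: (x * y * x) + b *: (y * x ^+ 2)));
  last by rewrite h !scalerA; congr (_ *: _); ring.
rewrite scalerDr scalerBr [RHS]addrC (addrC (_ *: (_ *: (_ ^+ 2 * _)))) addrA.
rewrite -!scalerAl -!scalerAr !scalerA !expr2 !mulrA -!scalerAl !scalerA.
congr (_ *: _ - _ *: _ + _ *: _); ring.
Qed.
Lemma bq_shift (i j k : int) : bq (i + k) (j + k) = bq i j.
Proof.
rewrite /bq.
have -> : j + k - (i + k) = j - i by ring.
have -> : (j + k == i + k) = (j == i) by apply/eqP/eqP; lia.
by have -> : (j + k == i + k + 1) = (j == i + 1) by apply/eqP/eqP; lia.
Qed.
Lemma bq_swap (i j : int) : 1 < `|i - j| -> bq j i = - bq i j.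
Proof.
move=> h; rewrite /bq.
have -> : (i == j) = false by apply/eqP; lia.
have -> : (i == j + 1) = false by apply/eqP; lia.
have -> : (j == i) = false by apply/eqP; lia.
have -> : (j == i + 1) = false by apply/eqP; lia.
rewrite /= -opprB sgzN !expN1r abszN; ring.
Qed.

Lemma qinv (e : int) : q ^ e * q ^ (- e) = 1.
Proof. by rewrite -expfzDr ?q_neq0 // subrr. Qed.

Lemma relsF (eps : int) (A : algType Kq) (E : int -> A) :
  El_rels eps E -> Elv_rels eps (fun i => (q ^ (- eps) *: E (i + 1) : revAT A)).
Proof.
move=> [h1 [h2 h3]]; split; [|split].
- move=> i j hij /=; apply: L1.
  rewrite h1; last by lia.
  by rewrite bq_shift bq_swap.
- move=> i /=.
  rewrite (_ : - (q ^ (- eps) * q2) = - (q ^ eps * q2) * (q ^ (- eps)) ^+ 2); last first.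
    rewrite -[q ^ (- eps) * q2]mulr1 -(qinv eps); move: (q ^ eps) (q ^ (- eps)) => u v; ring.
  by apply: L2; apply: h2.
- move=> i /=.
  rewrite (_ : - (q ^ (- eps) * q2) = - (q ^ eps * q2) * (q ^ (- eps)) ^+ 2); last first.
    rewrite -[q ^ (- eps) * q2]mulr1 -(qinv eps); move: (q ^ eps) (q ^ (- eps)) => u v; ring.
  rewrite subrK; apply: L2.
  by have := h3 (i + 1); rewrite addrK.
Qed.

Lemma relsG (eps : int) (A : algType Kq) (E : int -> A) :
  Elv_rels eps E -> El_rels eps (fun i => (q ^ eps *: E (i - 1) : revAT A)).
Proof.
move=> [h1 [h2 h3]]; split; [|split].
- move=> i j hij /=; apply: L1.
  rewrite h1; last by lia.
  by rewrite bq_shift bq_swap // opprK.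
- move=> i /=.
  rewrite (_ : - (q ^ eps * q2) = - (q ^ (- eps) * q2) * (q ^ eps) ^+ 2); last first.
    rewrite -[q ^ eps * q2]mulr1 -(qinv eps); move: (q ^ eps) (q ^ (- eps)) => u v; ring.
  rewrite addrK; apply: L2.
  by have := h2 (i - 1); rewrite subrK.
- move=> i /=.
  rewrite (_ : - (q ^ eps * q2) = - (q ^ (- eps) * q2) * (q ^ eps) ^+ 2); last first.
    rewrite -[q ^ eps * q2]mulr1 -(qinv eps); move: (q ^ eps) (q ^ (- eps)) => u v; ring.
  by apply: L2; apply: h3.
Qed.

Lemma lin0 (A B : algType Kq) (f : A -> B) :
  (forall (a : Kq) (x y : A), f (a *: x + y) = a *: f x + f y) ->
  f 0 = 0 /\ forall a x, f (a *: x) = a *: f x.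
Proof.
move=> h.
have f0 : f 0 = 0.
  have := h 1 0 0; rewrite !scale1r addr0 => e.
  by apply: (@addrI _ (f 0)); rewrite addr0 -e.
by split => // a x; have := h a x 0; rewrite addr0 f0 addr0.
Qed.

Theorem mainTheorem2 (eps : int) (heps : eps = 1 \/ eps = -1)
  (El : algType Kq) (E : int -> El) (Elv : algType Kq) (Ev : int -> Elv) :
  presents (El_rels eps) E -> presents (Elv_rels eps) Ev ->
  exists sigma : Elv -> El,
    (is_alg_antiiso sigma /\ forall i : int, sigma (Ev i) = q ^ (- eps) *: E (i + 1)) /\
    forall tau : Elv -> El,
      is_alg_antiiso tau -> (forall i : int, tau (Ev i) = q ^ (- eps) *: E (i + 1)) ->
      forall x, tau x = sigma x.
Proof.
move=> [relE uE] [relEv uEv].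
have [s [[sl [sm s1]] [sE suniq]]] := uEv _ _ (@relsF _ _ _ relE).
have [r [[rl [rm r1]] [rE runiq]]] := uE _ _ (@relsG _ _ _ relEv).
have [f0 [_ [_ f0uniq]]] := uEv _ _ relEv.
have [g0 [_ [_ g0uniq]]] := uE _ _ relE.
have idhomv : is_alg_hom (fun x : Elv => x) by split.
have idhom : is_alg_hom (fun x : El => x) by split.
have rshom : is_alg_hom (fun x : Elv => (r (s x) : Elv)).
  split; [|split].
  - move=> a x y; rewrite sl; exact: rl.
  - move=> x y; rewrite sm; exact: rm.
  - by rewrite s1; exact: r1.
have srhom : is_alg_hom (fun x : El => (s (r x) : El)).
  split; [|split].
  - move=> a x y; rewrite rl; exact: sl.
  - move=> x y; rewrite rm; exact: sm.
  - by rewrite r1; exact: s1.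
have rsE : forall i, (r (s (Ev i)) : Elv) = Ev i.
  move=> i; rewrite sE (lin0 _ _ _ rl).2 rE scalerA mulrC qinv scale1r.
  by rewrite addrK.
have srE : forall i, (s (r (E i)) : El) = E i.
  move=> i; rewrite rE (lin0 _ _ _ sl).2 sE scalerA qinv scale1r.
  by rewrite subrK.
have rs : forall x, (r (s x) : Elv) = x.
  move=> x; rewrite (f0uniq _ rshom rsE); symmetry; exact: (f0uniq _ idhomv (fun i => erefl)).
have sr : forall x, (s (r x) : El) = x.
  move=> x; rewrite (g0uniq _ srhom srE); symmetry; exact: (g0uniq _ idhom (fun i => erefl)).
exists (fun x => (s x : El)); split.
  split => //; split; first exact: sl.
  split; first by exists (fun x => (r x : Elv)).
  by split; [exact: sm | exact: s1].
move=> tau [tl [_ [tm t1]]] tE x.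
apply: (suniq (fun x => (tau x : revAT El))) => //.
Qed.
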